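(* Let $q\in[u]$ be a key and $\ell\ge0$ an integer. If the run containing position $h(q)$ has length $r\in[2^{\ell+2},2^{\ell+3})$, then at least one of the following (at most 12) consecutive $\ell$-intervals is near-full: the $\ell$-interval containing $h(q)$, the 8 nearest $\ell$-intervals to its left, and the 3 nearest $\ell$-intervals to its right.
   Context: Let $[s]=\{0,\dots,s-1\}$. Linear probing: fix a table size $t$ and a hash function $h:[u]\to[t]$. Positions are indexed by nonnegative integers (wrap-around is ignored, so positions beyond $t-1$ may be used), each either empty or holding one key. Starting from an empty table, the keys of a set $S\subseteq[u]$ are inserted one by one; a key $x$ is inserted by scanning positions $h(x),h(x)+1,\dots$ and placing $x$ in the first empty one. A run is a maximal interval of consecutive filled positions. For an integer $\ell\ge 0$, an $\ell$-interval is a set of positions $[i2^\ell,(i+1)2^\ell)$ for an integer $i\ge 0$. Given a query key $q\in[u]$ (which may or may not belong to $S$), an $\ell$-interval $I$ is called near-full if at least $\frac34 2^\ell$ keys $x\in S\setminus\{q\}$ satisfy $h(x)\in I$. *)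

(* Defs.v *)
From mathcomp Require Import all_boot.
Set Implicit Arguments. Unset Strict Implicit. Unset Printing Implicit Defensive.

(* The table state is represented by the sequence of filled positions. *)

(* Among the positions
   s, s+1, ..., s + size occ at least one is empty (pigeonhole), so the
   [find] below always succeeds and returns the least i with s+i empty. *)
Definition first_empty (occ : seq nat) (s : nat) : nat :=
  s + find (fun i => s + i \notin occ) (iota 0 (size occ).+1).

Definition lp_insert (h : nat -> nat) (occ : seq nat) (x : nat) : seq nat :=
  rcons occ (first_empty occ (h x)).

Definition lp_table (h : nat -> nat) (S : seq nat) : seq nat :=
  foldl (lp_insert h) [::] S.

Definition run_of_length (occ : seq nat) (p r : nat) : Prop :=
  exists a : nat,
    [/\ a <= p < a + r,
        (forall i, a <= i < a + r -> i \in occ),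
        (a = 0 \/ a.-1 \notin occ) &
        a + r \notin occ].

Definition interval_load (h : nat -> nat) (S : seq nat) (q l j : nat) : nat :=
  count (fun x => (x != q) && (j * 2 ^ l <= h x < j.+1 * 2 ^ l)) S.

Definition near_full (h : nat -> nat) (S : seq nat) (q l j : nat) : Prop :=
  3 * 2 ^ l <= 4 * interval_load h S q l j.

(* Main.v *)
Require Import Defs.
From mathcomp Require Import all_boot zify.

Lemma first_empty_spec (occ : seq nat) (s : nat) :
  [/\ s <= first_empty occ s, first_empty occ s \notin occ &
      forall z, s <= z < first_empty occ s -> z \in occ].
Proof.
rewrite /first_empty.
set P := (fun i => s + i \notin occ).
have hasP : has P (iota 0 (size occ).+1).
  apply/negPn/negP => /hasPn H.
  have : size (iota s (size occ).+1) <= size occ.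
    apply: uniq_leq_size; first exact: iota_uniq.
    move=> z; rewrite mem_iota => /andP [z1 z2].
    have := H (z - s); rewrite mem_iota /P => /(_ _)/negPn.
    rewrite subnKC //; apply; lia.
  by rewrite size_iota ltnn.
have hf : find P (iota 0 (size occ).+1) < (size occ).+1.
  by rewrite -[X in _ < X](size_iota 0) -has_find.
split.
- exact: leq_addr.
- have := nth_find 0 hasP; rewrite /P nth_iota //.
- move=> z /andP [z1 z2].
  have := @before_find _ 0 P (iota 0 (size occ).+1) (z - s) ltac:(lia).
  rewrite /P nth_iota; last lia.
  by rewrite add0n subnKC // => /negbFE.
Qed.

Lemma table_inv (h : nat -> nat) (S : seq nat) :
  let occ := lp_table h S in
  [/\ size occ = size S, uniq occ &
     forall x y, (x, y) \in zip S occ ->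
       h x <= y /\ forall z, h x <= z < y -> z \in occ].
Proof.
elim/last_ind: S => [|S x IH] //=.
rewrite /lp_table foldl_rcons -/(lp_table h S) /lp_insert.
case: IH => [Hs Hu Hz].
have [F1 F2 F3] := first_empty_spec (lp_table h S) (h x).
split.
- by rewrite !size_rcons Hs.
- by rewrite rcons_uniq F2.
- move=> x' y'; rewrite zip_rcons // mem_rcons inE => /orP [/eqP [-> ->]|].
  + split=> // z /F3 zi; by rewrite mem_rcons inE zi orbT.
  + move=> /Hz [H1 H2]; split=> // z /H2 zi; by rewrite mem_rcons inE zi orbT.
Qed.

Lemma count_in_le (T : eqType) (s : seq T) (a b : pred T) :
  (forall x, x \in s -> a x -> b x) -> count a s <= count b s.
Proof.
elim: s => [|x s IH] //= H.
apply: leq_add; last by apply: IH => y ys; apply: H; rewrite inE ys orbT.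
case ax: (a x) => //; by rewrite (H x (mem_head _ _) ax).
Qed.

Lemma count4 (T : Type) (p p0 p1 p2 p3 : pred T) (s : seq T) :
  (forall x, p x -> [|| p0 x, p1 x, p2 x | p3 x]) ->
  count p s <= count p0 s + count p1 s + count p2 s + count p3 s.
Proof.
move=> H; elim: s => [|x s IH] //=.
case px: (p x) => /=.
- have := H x px.
  case: (p0 x); case: (p1 x); case: (p2 x); case: (p3 x) => //= _; lia.
- lia.
Qed.

Lemma count_neq (p : pred nat) (s : seq nat) (q : nat) :
  count p s <= count (fun x => (x != q) && p x) s + count_mem q s.
Proof.
elim: s => [|x s IH] //=.
have IH2 : count p s <= count (fun x0 : nat => (x0 != q) && p x0) s + count_mem q s := IH. clear IH.
case: (p x); case: (eqVneq x q) => /= _; move: IH2; set C := count (pred1 q) s; set B := count (fun x0 => _) s; lia.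
Qed.

Theorem lemma3 (u t : nat) (h : nat -> nat) (S : seq nat) (q l r : nat) :
  (forall x, x < u -> h x < t) ->
  uniq S -> all (fun x => x < u) S ->
  q < u ->
  run_of_length (lp_table h S) (h q) r ->
  2 ^ (l + 2) <= r < 2 ^ (l + 3) ->
  exists j : nat,
    h q %/ 2 ^ l - 8 <= j <= h q %/ 2 ^ l + 3 /\ near_full h S q l j.
Proof.
move=> _ uS _ _ [a [/andP[ha1 ha2] Hin Ha Har]].
rewrite !expnD /near_full.
set M := 2 ^ l.
have M0 : 0 < M by rewrite expn_gt0.
move=> /andP [hr1 hr2]; rewrite (_ : 2 ^ 2 = 4) // in hr1; rewrite (_ : 2 ^ 3 = 8) // in hr2.
set i0 := a %/ M.
have e1 := leq_divM a M.
have e2 := ltn_ceil a M0.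
have b1 : i0 <= h q %/ M := leq_div2r M ha1.
have b2 : h q %/ M <= i0 + 8.
  have : h q <= 8 * M + a by lia.
  move/(leq_div2r M); rewrite divnMDl //; lia.
case: (leqP (3 * M) (4 * interval_load h S q l i0)) => [H|H0].
  by exists i0; split => //; lia.
case: (leqP (3 * M) (4 * interval_load h S q l (i0 + 1))) => [H|H1].
  by exists (i0 + 1); split => //; lia.
case: (leqP (3 * M) (4 * interval_load h S q l (i0 + 2))) => [H|H2].
  by exists (i0 + 2); split => //; lia.
case: (leqP (3 * M) (4 * interval_load h S q l (i0 + 3))) => [H|H3].
  by exists (i0 + 3); split => //; lia.
exfalso.
have [Hs Hu Hz] := table_inv h S.
set occ := lp_table h S in Hs Hu Hz Hin Ha Har.
set R := fun x => (i0 * M <= h x < (i0 + 4) * M).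
have C1 : (i0 + 4) * M - a <= count R S.
  have -> : count R S = count (fun pr => R pr.1) (zip S occ).
    rewrite -[in LHS](@unzip1_zip _ _ S occ); last by rewrite Hs.
    by rewrite count_map.
  apply: (@leq_trans (count (fun pr => pr.2 \in iota a ((i0 + 4) * M - a)) (zip S occ))).
    have -> : count (fun pr => pr.2 \in iota a ((i0 + 4) * M - a)) (zip S occ)
      = count (fun y => y \in iota a ((i0 + 4) * M - a)) (unzip2 (zip S occ)) by rewrite count_map.
    rewrite unzip2_zip ?Hs //.
    have -> : (i0 + 4) * M - a = size (iota a ((i0 + 4) * M - a)) by rewrite size_iota.
    rewrite -size_filter; apply: uniq_leq_size; first exact: iota_uniq.
    move=> z zi; rewrite mem_filter; apply/andP; split; first by rewrite size_iota; exact: zi. apply: Hin.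
    move: zi; rewrite mem_iota; lia.
  apply: count_in_le => [[x y]] /Hz [hy hz] /=; rewrite mem_iota => yi.
  rewrite /R.
  case: (leqP a (h x)) => hxa; first lia.
  case: Ha => [a0|an]; first lia.
  have := hz a.-1 ltac:(lia); by rewrite (negbTE an).
have C2 : count R S <= count (fun x => (x != q) && R x) S + 1.
  apply: (leq_trans (count_neq R S q)); rewrite leq_add2l.
  rewrite count_uniq_mem //; by case: (q \in S).
have C3 := @count4 _ (fun x => (x != q) && R x)
  (fun x => (x != q) && (i0 * M <= h x < i0.+1 * M))
  (fun x => (x != q) && ((i0 + 1) * M <= h x < (i0 + 1).+1 * M))
  (fun x => (x != q) && ((i0 + 2) * M <= h x < (i0 + 2).+1 * M))
  (fun x => (x != q) && ((i0 + 3) * M <= h x < (i0 + 3).+1 * M)) S.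
have C3' := C3 ltac:(move=> x /andP [-> /andP [r1 r2]] /=;
  case: (ltnP (h x) (i0.+1 * M)) => c1; first (apply/orP; left; lia);
  case: (ltnP (h x) ((i0 + 1).+1 * M)) => c2; first (apply/orP; right; apply/orP; left; lia);
  case: (ltnP (h x) ((i0 + 2).+1 * M)) => c3; first (apply/orP; right; apply/orP; right; apply/orP; left; lia);
  apply/orP; right; apply/orP; right; apply/orP; right; lia).
move: H0 H1 H2 H3; rewrite /interval_load -/M => H0 H1 H2 H3.
nia.
Qed.
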